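(* Let $N_k\Rightarrow_{\mathrm{MO}}^* N_{k+l}$ be a sequence of Monadic transformations that removes exactly all occurrences of atoms $P(t_1,\dots,t_n)$ (for a fixed non-monadic $n$-ary predicate $P$) and replaces them by the atoms $T(f_P(t_1,\dots,t_n))$. If $N^\bot_{k+l}$ is a conflicting core of $N_{k+l}$, then there exists a conflicting core of $N_k$.
   Context: First-order logic without equality. A clause is a finite multiset of literals written $\Gamma \rightarrow \Delta$. A Herbrand interpretation is a set of ground atoms; $I \models \Gamma\rightarrow\Delta$ iff for every grounding substitution $\sigma$, $\Delta\sigma\cap I\neq\emptyset$ or $\Gamma\sigma\not\subseteq I$; a clause set is satisfiable if some Herbrand interpretation satisfies all its clauses. A finite clause set $N^\bot$ is a conflicting core if for every substitution $\tau$ grounding all of $N^\bot$ (one substitution for the whole set, so variables are shared among clauses) the set $N^\bot\tau$ is unsatisfiable. $N^\bot$ is a conflicting core of $N$ if moreover every $C\in N^\bot$ equals $C'\sigma$ for some $C'\in N$ and substitution $\sigma$. Monadic transformation: with a fixed monadic predicate $T$ and function symbol $f_P$, both fresh, replace an occurrence of the atom $P(t_1,\dots,t_n)$, $n>1$, in a clause by $T(f_P(t_1,\dots,t_n))$. *)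

(* Defs.v *)
From Stdlib Require Import List Permutation Relations.
Import ListNotations.
Set Implicit Arguments.

Inductive term : Type :=
| Var : nat -> term
| Fn : nat -> list term -> term.

Record atom : Type := mkAtom { pred : nat; args : list term }.

(* A clause  Gamma -> Delta  ; the two lists are read as multisets. *)
Definition clause : Type := (list atom * list atom)%type.

Definition subst : Type := nat -> term.

Fixpoint tsubst (s : subst) (t : term) : term :=
  match t with
  | Var x => s x
  | Fn f ts => Fn f (map (tsubst s) ts)
  end.

Definition asubst (s : subst) (a : atom) : atom :=
  mkAtom (pred a) (map (tsubst s) (args a)).

Definition csubst (s : subst) (C : clause) : clause :=
  (map (asubst s) (fst C), map (asubst s) (snd C)).

Fixpoint tvars (t : term) : list nat :=
  match t with
  | Var x => [x]
  | Fn _ ts => flat_map tvars ts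
  end.

Definition avars (a : atom) : list nat := flat_map tvars (args a).
Definition cvars (C : clause) : list nat :=
  flat_map avars (fst C) ++ flat_map avars (snd C).

Definition ground_term (t : term) : Prop := tvars t = [].
Definition ground_atom (a : atom) : Prop := avars a = [].

Fixpoint tfuns (t : term) : list nat :=
  match t with
  | Var _ => []
  | Fn f ts => f :: flat_map tfuns ts
  end.
Definition afuns (a : atom) : list nat := flat_map tfuns (args a).
Definition cfuns (C : clause) : list nat :=
  flat_map afuns (fst C) ++ flat_map afuns (snd C).
Definition cpreds (C : clause) : list nat :=
  map pred (fst C) ++ map pred (snd C).

Definition grounds_clause (s : subst) (C : clause) : Prop :=
  forall x, In x (cvars C) -> ground_term (s x).

Definition grounds_set (s : subst) (N : list clause) : Prop :=
  forall C, In C N -> grounds_clause s C.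

Definition herbrand (I : atom -> Prop) : Prop :=
  forall a, I a -> ground_atom a.

Definition models (I : atom -> Prop) (C : clause) : Prop :=
  forall s, grounds_clause s C ->
    (exists a, In a (snd C) /\ I (asubst s a)) \/
    ~ (forall a, In a (fst C) -> I (asubst s a)).

Definition satisfiable (N : list clause) : Prop :=
  exists I, herbrand I /\ forall C, In C N -> models I C.

Definition clause_eq (C D : clause) : Prop :=
  Permutation (fst C) (fst D) /\ Permutation (snd C) (snd D).

Definition conflicting_core (Nb : list clause) : Prop :=
  forall tau, grounds_set tau Nb -> ~ satisfiable (map (csubst tau) Nb).

Definition conflicting_core_of (Nb N : list clause) : Prop :=
  conflicting_core Nb /\
  forall C, In C Nb -> exists C' s, In C' N /\ clause_eq C (csubst s C').

Definition atom_list_repl (P n T fP : nat) (l l' : list atom) : Prop :=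
  exists l1 l2 ts,
    l = l1 ++ mkAtom P ts :: l2 /\ length ts = n /\
    l' = l1 ++ mkAtom T [Fn fP ts] :: l2.

Definition clause_repl (P n T fP : nat) (C C' : clause) : Prop :=
  (atom_list_repl P n T fP (fst C) (fst C') /\ snd C' = snd C) \/
  (fst C' = fst C /\ atom_list_repl P n T fP (snd C) (snd C')).

Definition mo_step (P n T fP : nat) (N N' : list clause) : Prop :=
  exists N1 N2 C C',
    N = N1 ++ C :: N2 /\ N' = N1 ++ C' :: N2 /\ clause_repl P n T fP C C'.

Definition mo_steps (P n T fP : nat) : relation (list clause) :=
  clos_refl_trans (list clause) (mo_step P n T fP).

Definition no_pred (P : nat) (N : list clause) : Prop :=
  forall C, In C N -> ~ In P (cpreds C).

(* Main.v *)
Require Import Defs.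
From Stdlib Require Import List Permutation Relations Lia Arith.
Import ListNotations.

Fixpoint term_ind' (Pr : term -> Prop) (HV : forall x, Pr (Var x))
  (HF : forall f ts, Forall Pr ts -> Pr (Fn f ts)) (t : term) : Pr t :=
  match t with
  | Var x => HV x
  | Fn f ts => HF f ts ((fix go l := match l return Forall Pr l with
       | [] => Forall_nil _
       | t :: l => Forall_cons _ (term_ind' Pr HV HF t) (go l) end) ts)
  end.

Lemma tsubst_comp s u t : tsubst s (tsubst u t) = tsubst (fun x => tsubst s (u x)) t.
Proof.
  induction t using term_ind'; simpl; auto.
  f_equal. rewrite map_map. apply map_ext_in. intros a Ha.
  rewrite Forall_forall in H. auto.
Qed.

Lemma tsubst_ext u v t : (forall x, In x (tvars t) -> u x = v x) -> tsubst u t = tsubst v t.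
Proof.
  induction t using term_ind'; simpl; intros Hx.
  - apply Hx; auto.
  - f_equal. apply map_ext_in. intros a Ha. rewrite Forall_forall in H.
    apply H; auto. intros x Hx'. apply Hx. apply in_flat_map. eauto.
Qed.

Lemma tsubst_id t : tsubst Var t = t.
Proof.
  induction t using term_ind'; simpl; auto.
  f_equal. rewrite Forall_forall in H. rewrite <- (map_id ts) at 2.
  apply map_ext_in. auto.
Qed.

Lemma tsubst_ground s t : ground_term t -> tsubst s t = t.
Proof.
  intros H. rewrite <- (tsubst_id t) at 2. apply tsubst_ext.
  unfold ground_term in H. rewrite H. simpl. tauto.
Qed.

Lemma asubst_ground2 s tau b : (forall x, In x (avars b) -> ground_term (tau x)) ->
  asubst s (asubst tau b) = asubst tau b.
Proof.
  intros H. unfold asubst. simpl. f_equal. rewrite map_map. apply map_ext_in.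
  intros t Ht. rewrite tsubst_comp. apply tsubst_ext. intros x Hx.
  apply tsubst_ground. apply H. unfold avars. apply in_flat_map. eauto.
Qed.

Definition backa (T fP P : nat) (a : atom) : atom :=
  if Nat.eqb (pred a) T then
    match args a with
    | [Fn f ts] => if Nat.eqb f fP then mkAtom P ts else a
    | _ => a
    end
  else a.
Definition backc T fP P (C : clause) : clause :=
  (map (backa T fP P) (fst C), map (backa T fP P) (snd C)).
Definition good T fP a := pred a <> T \/ exists ts, a = mkAtom T [Fn fP ts].
Definition goodc T fP (C : clause) := forall a, In a (fst C) \/ In a (snd C) -> good T fP a.

Lemma backa_notT T fP P a : pred a <> T -> backa T fP P a = a.
Proof. intros H. unfold backa. apply Nat.eqb_neq in H. rewrite H. auto. Qed.

Lemma backa_T T fP P ts : backa T fP P (mkAtom T [Fn fP ts]) = mkAtom P ts.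
Proof. unfold backa. simpl. rewrite !Nat.eqb_refl. auto. Qed.

Lemma backa_P T fP P ts : 1 < length ts -> backa T fP P (mkAtom P ts) = mkAtom P ts.
Proof.
  intros H. unfold backa. simpl. destruct (P =? T); auto.
  destruct ts as [|t [|t2 r]]; simpl in H; try lia; auto. destruct t; auto.
Qed.

Lemma good_subst T fP s a : good T fP a -> good T fP (asubst s a).
Proof.
  intros [H|[ts ->]].
  - left. exact H.
  - right. exists (map (tsubst s) ts). reflexivity.
Qed.

Lemma backa_subst T fP P s a : good T fP a ->
  backa T fP P (asubst s a) = asubst s (backa T fP P a).
Proof.
  intros [H|[ts ->]].
  - rewrite !backa_notT; auto.
  - unfold asubst at 1. simpl. rewrite backa_T, backa_T. reflexivity.
Qed.

Lemma avars_back T fP P a x : good T fP a -> In x (avars a) -> In x (avars (backa T fP P a)).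
Proof.
  intros [H|[ts ->]] Hx.
  - rewrite backa_notT; auto.
  - rewrite backa_T. unfold avars in *. simpl in *. rewrite app_nil_r in Hx. exact Hx.
Qed.

Lemma map_back_id T fP P l : (forall a, In a l -> pred a <> T) -> map (backa T fP P) l = l.
Proof.
  induction l; simpl; intros H; auto. rewrite backa_notT; auto. f_equal; auto.
Qed.

Definition Inv T fP P (Nk N : list clause) :=
  forall C, In C N -> In (backc T fP P C) Nk /\ goodc T fP C.

Lemma repl_list P n T fP l l' : 1 < n -> atom_list_repl P n T fP l l' ->
  map (backa T fP P) l' = map (backa T fP P) l /\
  ((forall a, In a l -> good T fP a) -> forall a, In a l' -> good T fP a).
Proof.
  intros Hn (l1 & l2 & ts & -> & Hl & ->). split.
  - rewrite !map_app. simpl. rewrite backa_T, backa_P by lia. reflexivity.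
  - intros H a Ha. apply in_app_or in Ha. destruct Ha as [Ha|[<-|Ha]].
    + apply H. apply in_or_app. auto.
    + right. eauto.
    + apply H. apply in_or_app. simpl. auto.
Qed.

Lemma step_inv P n T fP Nk N N' : 1 < n -> mo_step P n T fP N N' -> Inv T fP P Nk N -> Inv T fP P Nk N'.
Proof.
  intros Hn (N1 & N2 & C & C' & -> & -> & Hr) HI D HD.
  apply in_app_or in HD. destruct HD as [HD|[<-|HD]].
  - apply HI. apply in_or_app; auto.
  - destruct (HI C) as [H1 H2]. { apply in_or_app; simpl; auto. }
    destruct C as [g d], C' as [g' d']. unfold backc, goodc in *; simpl in *.
    destruct Hr as [[Hr E]|[E Hr]]; simpl in *; subst;
      destruct (repl_list _ _ _ _ _ _ Hn Hr) as [E G]; rewrite E; split; auto;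
      intros a [Ha|Ha]; auto; eapply G; eauto.
  - apply HI. apply in_or_app; simpl; auto.
Qed.

Lemma steps_inv P n T fP Nk N N' : 1 < n -> mo_steps P n T fP N N' -> Inv T fP P Nk N -> Inv T fP P Nk N'.
Proof.
  intros Hn H. induction H; auto. eapply step_inv; eauto.
Qed.

Definition liftI T fP P (I : atom -> Prop) (a : atom) : Prop :=
  (pred a <> T /\ I a) \/ (exists ts, a = mkAtom T [Fn fP ts] /\ I (mkAtom P ts)).

Lemma liftI_iff T fP P I u a : good T fP a ->
  (liftI T fP P I (asubst u a) <-> I (asubst u (backa T fP P a))).
Proof.
  intros [H|[ts ->]]; unfold liftI.
  - rewrite backa_notT by auto. split.
    + intros [[_ H']|[ts [E _]]]; auto. exfalso. apply H.
      change (pred (asubst u a) = T). rewrite E. reflexivity.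
    + intros H'. left. split; auto.
  - rewrite backa_T. unfold asubst at 1. simpl. split.
    + intros [[H _]|[ts' [E H']]]. { exfalso; auto. }
      injection E as E. subst. exact H'.
    + intros H'. right. eexists. split; [reflexivity|]. exact H'.
Qed.

Lemma grounds_atom tau C a : grounds_clause tau C -> In a (fst C) \/ In a (snd C) ->
  forall x, In x (avars a) -> ground_term (tau x).
Proof.
  intros H Ha x Hx. apply H. unfold cvars. apply in_or_app.
  destruct Ha; [left|right]; apply in_flat_map; eauto.
Qed.

Lemma in_fb T fP P l x : (forall a, In a l -> good T fP a) ->
  In x (flat_map avars l) -> In x (flat_map avars (map (backa T fP P) l)).
Proof.
  intros G Hx. apply in_flat_map in Hx. destruct Hx as [a [Ha Hx]].
  apply in_flat_map. exists (backa T fP P a). split. apply in_map; auto.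
  apply avars_back; auto.
Qed.

Lemma map_back_subst T fP P s l : (forall a, In a l -> good T fP a) ->
  map (backa T fP P) (map (asubst s) l) = map (asubst s) (map (backa T fP P) l).
Proof.
  intros G. rewrite !map_map. apply map_ext_in. intros a Ha. apply backa_subst; auto.
Qed.

Theorem lemma4 (P n T fP : nat) (Nk Nkl Nbkl : list clause) :
  1 < n ->
  (* T and fP are fresh for Nk *)
  (forall C, In C Nk -> ~ In T (cpreds C) /\ ~ In fP (cfuns C)) ->
  (* every P-atom of Nk has arity n *)
  (forall C a, In C Nk -> (In a (fst C) \/ In a (snd C)) ->
     pred a = P -> length (args a) = n) ->
  mo_steps P n T fP Nk Nkl ->
  no_pred P Nkl ->
  conflicting_core_of Nbkl Nkl ->
  exists Nbk, conflicting_core_of Nbk Nk.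
Proof.
  intros Hn Hfr _ Hst _ [Hcore Hinst].
  assert (HI : Inv T fP P Nk Nkl).
  { eapply steps_inv; eauto. intros C HC. destruct (Hfr C HC) as [HT _].
    assert (Hp : forall a, In a (fst C) \/ In a (snd C) -> pred a <> T).
    { intros a Ha E. apply HT. unfold cpreds. apply in_or_app.
      destruct Ha; [left|right]; rewrite <- E; apply in_map; auto. }
    destruct C as [g d]. unfold backc; simpl in *.
    rewrite !map_back_id by (intros; apply Hp; auto). split; auto.
    intros a Ha. left. apply Hp. auto. }
  assert (Gd : forall C, In C Nbkl -> goodc T fP C).
  { intros C HC. destruct (Hinst C HC) as (C' & s & HC' & [E1 E2]).
    destruct (HI C' HC') as [_ G]. intros a [Ha|Ha].
    - apply (Permutation_in _ E1) in Ha. simpl in Ha. apply in_map_iff in Ha.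
      destruct Ha as [b [<- Hb]]. apply good_subst. apply G. auto.
    - apply (Permutation_in _ E2) in Ha. simpl in Ha. apply in_map_iff in Ha.
      destruct Ha as [b [<- Hb]]. apply good_subst. apply G. auto. }
  exists (map (backc T fP P) Nbkl). split.
  - intros tau Hg [I [Hh Hm]]. apply (Hcore tau).
    { intros C HC x Hx. apply (Hg (backc T fP P C)). apply in_map; auto.
      unfold cvars in *. simpl. apply in_app_or in Hx. apply in_or_app.
      destruct Hx; [left|right]; apply in_fb; auto; intros a Ha; apply (Gd C HC); auto. }
    exists (liftI T fP P I). split.
    + intros a [[_ H]|[ts [-> H]]]. apply Hh; auto.
      apply Hh in H. unfold ground_atom, avars in *. simpl in *. rewrite app_nil_r. exact H.
    + intros C HC. apply in_map_iff in HC. destruct HC as [C0 [<- HC0]].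
      assert (Hgb : grounds_clause tau (backc T fP P C0)). { apply Hg. apply in_map; auto. }
      assert (Hg0 : grounds_clause tau C0).
      { intros x Hx. apply Hgb.
        unfold cvars in *. simpl. apply in_app_or in Hx. apply in_or_app.
        destruct Hx; [left|right]; apply in_fb; auto; intros a Ha; apply (Gd C0 HC0); auto. }
      assert (Hmb := Hm (csubst tau (backc T fP P C0)) ltac:(apply in_map; apply in_map; auto)).
      intros s _.
      destruct (Hmb (fun _ => Fn 0 [])) as [[b [Hb Ib]]|Hneg].
      { intros x _. reflexivity. }
      * left. simpl in Hb. apply in_map_iff in Hb. destruct Hb as [b' [<- Hb']].
        apply in_map_iff in Hb'. destruct Hb' as [a [<- Ha]].
        exists (asubst tau a). split. simpl. apply in_map; auto.
        rewrite asubst_ground2 by (eapply grounds_atom; eauto).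
        apply liftI_iff. apply (Gd C0 HC0); auto.
        rewrite asubst_ground2 in Ib. exact Ib.
        eapply grounds_atom. exact Hgb. simpl. right. apply in_map; auto.
      * right. intros H. apply Hneg. intros b Hb.
        simpl in Hb. apply in_map_iff in Hb. destruct Hb as [b' [<- Hb']].
        apply in_map_iff in Hb'. destruct Hb' as [a [<- Ha]].
        rewrite asubst_ground2.
        2: { eapply grounds_atom. exact Hgb. simpl. left. apply in_map; auto. }
        apply liftI_iff. apply (Gd C0 HC0); auto.
        rewrite <- (asubst_ground2 s tau a) by (eapply grounds_atom; eauto).
        apply H. simpl. apply in_map; auto.
  - intros C HC. apply in_map_iff in HC. destruct HC as [C0 [<- HC0]].
    destruct (Hinst C0 HC0) as (C' & s & HC' & [E1 E2]).
    destruct (HI C' HC') as [Hk G].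
    exists (backc T fP P C'), s. split; auto.
    split; simpl.
    + rewrite <- map_back_subst by (intros; apply G; auto).
      apply Permutation_map. exact E1.
    + rewrite <- map_back_subst by (intros; apply G; auto).
      apply Permutation_map. exact E2.
Qed.
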